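(* Let $u$ be a set, $F,G$ conjunctive set transformers on $u$ with $F(u)=u$ and $G(u)=u$, and $q\subseteq u$. Then $X(q)(\varnothing)$ equals the least fixpoint of the monotone map ${\cal F}(q)(\varnothing):Y\mapsto q\cup(G(\varnothing)\cap F(Y))$ on $\mathbb{P}(u)$; equivalently, the guard $\overline{X(q)(\varnothing)}$ of $X(q)$ is the complement of this least fixpoint.
   Context: A set transformer on $u$ is a map $E:\mathbb{P}(u)\to\mathbb{P}(u)$; it is conjunctive if it preserves intersections of nonempty families of subsets (in particular it is monotone). For $a\subseteq u$, $\overline{a}=u\setminus a$; $\mathrm{grd}(E)=\overline{E(\varnothing)}$. The fair iteration $X(q)=\overline{q}\Longrightarrow((F\,;X(q))\mathrel{\triangledown} G)$ (guarded command, sequencing, and dovetail/fair choice) is the set transformer $X(q)(r)={\cal L}(X(q))(r)\cap\mathrm{pre}(X(q))$ where: the liberal part ${\cal L}(X(q))(r)$ is the greatest fixpoint of the monotone map $Y\mapsto q\cup(G(r)\cap F(Y))$ on $\mathbb{P}(u)$, and the termination set $\mathrm{pre}(X(q))$ is the least fixpoint of the monotone map $Y\mapsto q\cup\mathrm{grd}(G)\cup F(Y)$. *)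

(* Defs.v *)
(* subsets of the universe u are modelled as
   [set T] for a type T playing the role of u. *)
From mathcomp Require Import all_boot.
From mathcomp Require Import boolp classical_sets.
Set Implicit Arguments. Unset Strict Implicit. Unset Printing Implicit Defensive.
Local Open Scope classical_set_scope.

Definition transformer (T : Type) := set T -> set T.

Definition conjunctive (T : Type) (E : transformer T) : Prop :=
  forall S : set (set T), S !=set0 ->
    E (\bigcap_(Y in S) Y) = \bigcap_(Y in S) E Y.

Definition grd (T : Type) (E : transformer T) : set T := ~` E set0.

Definition lfp (T : Type) (f : set T -> set T) : set T :=
  \bigcap_(Y in [set Y | f Y `<=` Y]) Y.
Definition gfp (T : Type) (f : set T -> set T) : set T :=
  \bigcup_(Y in [set Y | Y `<=` f Y]) Y.

Definition liberal (T : Type) (F G : transformer T) (q r : set T) : set T :=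
  gfp (fun Y => q `|` (G r `&` F Y)).

Definition pre_X (T : Type) (F G : transformer T) (q : set T) : set T :=
  lfp (fun Y => q `|` grd G `|` F Y).

(* The fair iteration X(q) = ~q ==> ((F ; X(q)) dovetail G). *)
Definition fairX (T : Type) (F G : transformer T) (q : set T) : transformer T :=
  fun r => liberal F G q r `&` pre_X F G q.

(* Main.v *)
Require Import Defs.
From mathcomp Require Import all_boot.
From mathcomp Require Import boolp classical_sets.
Local Open Scope classical_set_scope.

Lemma conjI (T : Type) (F : set T -> set T) (hF : conjunctive F) (Y Z : set T) :
  F (Y `&` Z) = F Y `&` F Z.
Proof.
have ne : [set W | W = Y \/ W = Z] !=set0 by exists Y; left.
have E1 : \bigcap_(W in [set W | W = Y \/ W = Z]) W = Y `&` Z.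
  apply/seteqP; split => x.
  - by move=> H; split; apply: H; [left|right].
  - by move=> [Hy Hz] W [->|->].
have := hF _ ne; rewrite E1 => ->.
apply/seteqP; split => x.
- by move=> H; split; apply: H; [left|right].
- by move=> [Hy Hz] W [->|->].
Qed.

Lemma conjM (T : Type) (F : set T -> set T) (hF : conjunctive F) (Y Z : set T) :
  Y `<=` Z -> F Y `<=` F Z.
Proof.
move=> YZ x Fx.
have : F (Y `&` Z) x by rewrite (_ : Y `&` Z = Y) //; apply/seteqP; split => y; [case|move=> ?; split; auto].
by rewrite conjI // => -[].
Qed.

Lemma lfp_low (T : Type) (f : set T -> set T) Y : f Y `<=` Y -> lfp f `<=` Y.
Proof. by move=> H x Hx; apply: Hx. Qed.

Lemma lfp_pre (T : Type) (f : set T -> set T) :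
  (forall A B, A `<=` B -> f A `<=` f B) -> f (lfp f) `<=` lfp f.
Proof.
move=> mf x Hx; rewrite /lfp /bigcap /= => Y HY; apply: (HY); apply: (mf (lfp f)) Hx.
by move=> z Hz; apply: Hz.
Qed.

Lemma gfp_post (T : Type) (f : set T -> set T) :
  (forall A B, A `<=` B -> f A `<=` f B) -> gfp f `<=` f (gfp f).
Proof.
move=> mf x [Y HY Yx]; apply: (mf Y); last exact: HY.
by move=> y Hy; exists Y.
Qed.

Arguments lfp_low {T f Y}.
Arguments lfp_pre {T f}.
Arguments gfp_post {T f}.

Theorem lemma4 (T : Type) (F G : set T -> set T) (q : set T)
  (hF : conjunctive F) (hG : conjunctive G)
  (hFu : F setT = setT) (hGu : G setT = setT) :
  fairX F G q set0 = lfp (fun Y => q `|` (G set0 `&` F Y)).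
Proof.
set h := fun Y => q `|` (G set0 `&` F Y).
set k := fun Y => q `|` grd G `|` F Y.
have mh : forall A B, A `<=` B -> h A `<=` h B.
  move=> A B AB x [qx|[Ga Fa]]; first by left.
  by right; split => //; apply: (@conjM _ F hF A B AB x Fa).
have mk : forall A B, A `<=` B -> k A `<=` k B.
  move=> A B AB x [[qx|gx]|Fa]; [by left; left|by left; right|].
  by right; apply: (@conjM _ F hF A B AB x Fa).
rewrite /fairX /liberal /pre_X -/h -/k.
apply/seteqP; split.
- move=> x [Hg Hk].
  set Z := fun y => gfp h y -> lfp h y.
  suff : lfp k `<=` Z by move=> S; exact: S _ Hk Hg.
  apply: lfp_low => y Hy Gy.
  have := gfp_post mh y Gy; case=> [qy|[G0 Fg]].
    by apply: lfp_pre => //; left.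
  case: Hy => [[qy|gy]|FZ].
  + by apply: lfp_pre => //; left.
  + by [].
  + apply: lfp_pre => //; right; split => //.
    have : F (Z `&` gfp h) y by rewrite (@conjI _ F hF).
    apply: (@conjM _ F hF) => // w [Zw Gw]; exact: Zw.
- move=> x Hx; split.
  + exists (lfp h) => //=.
    apply: lfp_low; apply: (mh); exact: (lfp_pre mh).
  + move: x Hx; apply: lfp_low => y Hy; apply: (lfp_pre mk).
    case: Hy => [qy|[_ Fy]]; [by left; left|by right].
Qed.
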